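(* For each $n$ let $N_n=(N_{n,1},\ldots,N_{n,M_n})$ be multinomially distributed with parameters $(n,p_{n,1},\ldots,p_{n,M_n})$, where $\max_m p_{n,m}\to0$ as $n\to\infty$ and $\liminf_{n\to\infty}n\min_m p_{n,m}>0$. For given real numbers $\alpha_{n,m}$ let $$s_n^2=\frac2{n^2}\sum_m\frac{\alpha_{n,m}^2}{p_{n,m}^2}+\frac4n\sum_m p_{n,m}\Big(\frac{\alpha_{n,m}}{p_{n,m}}-\sum_{m'}\alpha_{n,m'}\Big)^2 .$$ Then $$\sum_m\alpha_{n,m}\Big(\frac{N_{n,m}(N_{n,m}-1)}{n(n-1)p_{n,m}^2}-1\Big)=O_P\Big(s_n+\frac{\sum_m|\alpha_{n,m}|}{\sqrt n}\Big).$$ *)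

(* Defs.v *)
From HB Require Import structures.
From mathcomp Require Import all_boot all_order all_algebra.
From mathcomp Require Import reals.
Set Implicit Arguments. Unset Strict Implicit. Unset Printing Implicit Defensive.
Import Order.TTheory GRing.Theory Num.Theory.
Local Open Scope ring_scope.

(* The multinomial law Mult(n; p_1,...,p_M) realised as the law of the cell
   counts of n i.i.d. draws with distribution p on the cells 'I_M. *)
Section Multinomial.
Variables (R : realType) (n M : nat) (p : 'I_M -> R).

Definition mult_weight (w : {ffun 'I_n -> 'I_M}) : R := \prod_(i < n) p (w i).

Definition mult_prob (E : pred {ffun 'I_n -> 'I_M}) : R :=
  \sum_(w : {ffun 'I_n -> 'I_M} | E w) mult_weight w.

Definition cell_count (w : {ffun 'I_n -> 'I_M}) (m : 'I_M) : R :=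
  (#|[set i : 'I_n | w i == m]|)%:R.

Variable alpha : 'I_M -> R.

Definition stat_T (w : {ffun 'I_n -> 'I_M}) : R :=
  \sum_(m < M) alpha m *
    ((cell_count w m * (cell_count w m - 1)) /
       (n%:R * (n%:R - 1) * p m ^+ 2) - 1).

Definition s2 : R :=
  2 / (n%:R ^+ 2) * \sum_(m < M) (alpha m ^+ 2 / p m ^+ 2)
  + 4 / n%:R * \sum_(m < M) p m * (alpha m / p m - \sum_(m' < M) alpha m') ^+ 2.

Definition rate : R :=
  Num.sqrt s2 + (\sum_(m < M) `|alpha m|) / Num.sqrt n%:R.

End Multinomial.

(* Main.v *)
Require Import Defs.
From HB Require Import structures.
From mathcomp Require Import all_boot all_order all_algebra.
From mathcomp Require Import reals.
From mathcomp Require Import ring lra.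
Set Implicit Arguments. Unset Strict Implicit. Unset Printing Implicit Defensive.
Import Order.TTheory GRing.Theory Num.Theory.
Local Open Scope ring_scope.

Section Gen.
Variables (R : realType) (M : nat) (p : 'I_M -> R).
Hypothesis p_sum1 : \sum_(m < M) p m = 1.

Definition consf n (x : 'I_M) (v : {ffun 'I_n -> 'I_M}) : {ffun 'I_n.+1 -> 'I_M} :=
  [ffun i => if unlift ord0 i is Some j then v j else x].

Lemma consf0 n x (v : {ffun 'I_n -> 'I_M}) : consf x v ord0 = x.
Proof. by rewrite ffunE unlift_none. Qed.

Lemma consfS n x (v : {ffun 'I_n -> 'I_M}) j : consf x v (lift ord0 j) = v j.
Proof. by rewrite ffunE liftK. Qed.

Lemma sum_consf n x (v : {ffun 'I_n -> 'I_M}) (G : 'I_M -> R) :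
  \sum_(i < n.+1) G (consf x v i) = G x + \sum_(i < n) G (v i).
Proof.
rewrite big_ord_recl consf0; congr (_ + _); apply: eq_bigr => i _.
by rewrite consfS.
Qed.

Lemma weight_consf n x (v : {ffun 'I_n -> 'I_M}) :
  mult_weight p (consf x v) = p x * mult_weight p v.
Proof.
rewrite /mult_weight big_ord_recl consf0; congr (_ * _); apply: eq_bigr => i _.
by rewrite consfS.
Qed.

Definition Ex n (F : {ffun 'I_n -> 'I_M} -> R) :=
  \sum_(w : {ffun 'I_n -> 'I_M}) mult_weight p w * F w.

Lemma Ex_split n F : Ex F = \sum_(x < M) p x * Ex (fun v : {ffun 'I_n -> 'I_M} => F (consf x v)).
Proof.
rewrite /Ex; symmetry.
under eq_bigr => x _ do rewrite big_distrr /=.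
rewrite pair_big /=.
rewrite (reindex (fun u : 'I_M * {ffun 'I_n -> 'I_M} => consf u.1 u.2)) /=.
  symmetry; apply: eq_bigr => u _; rewrite weight_consf; ring.
apply: onW_bij.
exists (fun w : {ffun 'I_n.+1 -> 'I_M} => (w ord0, [ffun j => w (lift ord0 j)])).
  move=> [x v] /=; rewrite consf0; congr (_, _); apply/ffunP => j.
  by rewrite ffunE consfS.
move=> w; apply/ffunP => i; rewrite ffunE /=.
case: unliftP => [j ->|->] //; by rewrite ffunE.
Qed.

Lemma Ex_ext n (F G : {ffun 'I_n -> 'I_M} -> R) : (forall w, F w = G w) -> Ex F = Ex G.
Proof. by move=> h; apply: eq_bigr => w _; rewrite h. Qed.

Lemma ExD n (F G : {ffun 'I_n -> 'I_M} -> R) :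
  Ex (fun w => F w + G w) = Ex F + Ex G.
Proof. by rewrite /Ex -big_split; apply: eq_bigr => w _; rewrite mulrDr. Qed.

Lemma ExZ n c (F : {ffun 'I_n -> 'I_M} -> R) :
  Ex (fun w => c * F w) = c * Ex F.
Proof. rewrite /Ex big_distrr; apply: eq_bigr => w _ /=. ring. Qed.

Lemma Ex1 n : Ex (fun _ : {ffun 'I_n -> 'I_M} => 1) = 1.
Proof.
elim: n => [|n IH].
  rewrite /Ex /mult_weight; under eq_bigr do rewrite big_ord0 mulr1.
  by rewrite sumr_const card_ffun !card_ord expn0.
rewrite Ex_split; under eq_bigr do rewrite IH mulr1; exact: p_sum1.
Qed.

Lemma ExC n c : Ex (fun _ : {ffun 'I_n -> 'I_M} => c) = c.
Proof. by rewrite -[RHS]mulr1 -(Ex1 n) -ExZ; apply: Ex_ext => w; rewrite mulr1. Qed.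


Section Moments.
Variable h : 'I_M -> 'I_M -> R.
Hypothesis hsym : forall x y, h x y = h y x.

Definition h1 y := \sum_(z < M) p z * h z y.
Hypothesis Eh0 : \sum_(x < M) p x * h1 x = 0.
Definition kk x y := \sum_(z < M) p z * h z x * h z y.
Definition q y := \sum_(z < M) p z * h1 z * h z y.
Definition L n (w : {ffun 'I_n -> 'I_M}) y := \sum_(i < n) h (w i) y.
Definition SS n (w : {ffun 'I_n -> 'I_M}) :=
  \sum_(i < n) \sum_(j < n) h (w i) (w j) - \sum_(i < n) h (w i) (w i).

Lemma L_cons n x (v : {ffun 'I_n -> 'I_M}) y : L (consf x v) y = h x y + L v y.
Proof. exact: (sum_consf x v (fun z => h z y)). Qed.

Lemma S_cons n x (v : {ffun 'I_n -> 'I_M}) : SS (consf x v) = SS v + 2 * L v x.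
Proof.
rewrite /SS /L (sum_consf x v (fun z => h z z)).
rewrite (sum_consf x v (fun z => \sum_(j < n.+1) h z (consf x v j))) /=.
rewrite (sum_consf x v (h x)).
under eq_bigr => i _ do rewrite (sum_consf x v (h (v i))).
rewrite big_split /=.
have -> : \sum_(i < n) h x (v i) = \sum_(i < n) h (v i) x.
  by apply: eq_bigr => i _; rewrite hsym.
ring.
Qed.

Lemma sum_pc c : \sum_(x < M) p x * c = c.
Proof. by rewrite -big_distrl /= p_sum1 mul1r. Qed.

Lemma E1 n y : Ex (fun w : {ffun 'I_n -> 'I_M} => L w y) = n%:R * h1 y.
Proof.
elim: n => [|n IH].
  by rewrite (Ex_ext (G := fun _ => 0)) ?ExC ?mul0r // => w; rewrite /L big_ord0.
rewrite Ex_split.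
under eq_bigr => x _ do rewrite (Ex_ext (fun v => L_cons x v y)) ExD ExC IH.
rewrite (eq_bigr (fun x => p x * h x y + n%:R * h1 y * p x)); last by move=> x _; ring.
rewrite big_split /= -big_distrr /= p_sum1 -natr1 /h1; ring.
Qed.

Lemma E2 n x y : Ex (fun w : {ffun 'I_n -> 'I_M} => L w x * L w y) =
  n%:R * kk x y + n%:R * (n%:R - 1) * h1 x * h1 y.
Proof.
elim: n => [|n IH].
  rewrite (Ex_ext (G := fun _ => 0)); first by rewrite ExC; ring.
  by move=> w; rewrite /L big_ord0 mul0r.
rewrite Ex_split.
have key z : Ex (fun v : {ffun 'I_n -> 'I_M} => L (consf z v) x * L (consf z v) y) =
   h z x * h z y + h z x * (n%:R * h1 y) + h z y * (n%:R * h1 x) + (n%:R * kk x y + n%:R * (n%:R - 1) * h1 x * h1 y).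
  rewrite (Ex_ext (G := fun v => h z x * h z y + h z x * L v y + h z y * L v x + L v x * L v y)).
    by rewrite !ExD !ExZ ExC IH !E1.
  by move=> v; rewrite !L_cons; ring.
under eq_bigr do rewrite key.
rewrite (eq_bigr (fun z => p z * h z x * h z y + n%:R * h1 y * (p z * h z x) + n%:R * h1 x * (p z * h z y) + (n%:R * kk x y + n%:R * (n%:R - 1) * h1 x * h1 y) * p z)); last by move=> z _; ring.
rewrite !big_split /= -!big_distrr /= p_sum1 -natr1 /h1 /kk; ring.
Qed.

Lemma sum_kk y : \sum_(z < M) p z * kk z y = q y.
Proof.
rewrite /kk /q; under eq_bigr do rewrite big_distrr /=.
rewrite exchange_big /=; apply: eq_bigr => u _.
rewrite /h1 big_distrr /= big_distrl /=. apply: eq_bigr => z _; rewrite (hsym u z); ring.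
Qed.

Lemma sum_q : \sum_(z < M) p z * q z = \sum_(x < M) p x * h1 x ^+ 2.
Proof.
rewrite /q; under eq_bigr do rewrite big_distrr /=.
rewrite exchange_big /=; apply: eq_bigr => u _.
rewrite (eq_bigr (fun i => p u * h1 u * (p i * h i u))); last by move=> i _; rewrite (hsym u i); ring.
by rewrite -big_distrr /= -/(h1 u); ring.
Qed.

Lemma E3 n : Ex (fun w : {ffun 'I_n -> 'I_M} => SS w) = 0.
Proof.
elim: n => [|n IH].
  rewrite (Ex_ext (G := fun _ => 0)); first by rewrite ExC.
  by move=> w; rewrite /SS !big_ord0 subr0.
rewrite Ex_split.
under eq_bigr => z _ do rewrite (Ex_ext (fun v => S_cons z v)) ExD ExZ IH E1.
rewrite (eq_bigr (fun z => 2 * n%:R * (p z * h1 z))); last by move=> z _; ring.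
by rewrite -big_distrr /= Eh0 mulr0.
Qed.

Lemma E4 n y : Ex (fun w : {ffun 'I_n -> 'I_M} => SS w * L w y) =
  2 * n%:R * (n%:R - 1) * q y.
Proof.
elim: n => [|n IH].
  rewrite (Ex_ext (G := fun _ => 0)); first by rewrite ExC; ring.
  by move=> w; rewrite /L big_ord0 mulr0.
rewrite Ex_split.
have key z : Ex (fun v : {ffun 'I_n -> 'I_M} => SS (consf z v) * L (consf z v) y) =
   h z y * 0 + 2 * n%:R * (n%:R - 1) * q y + 2 * h z y * (n%:R * h1 z)
   + 2 * (n%:R * kk z y + n%:R * (n%:R - 1) * h1 z * h1 y).
  rewrite (Ex_ext (G := fun v => h z y * SS v + SS v * L v y + (2 * h z y) * L v z + 2 * (L v z * L v y))).
    by rewrite !ExD !ExZ IH E1 E2 E3.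
  by move=> v; rewrite S_cons L_cons; ring.
under eq_bigr do rewrite key.
rewrite (eq_bigr (fun z => 2 * n%:R * (n%:R - 1) * q y * p z + 2 * n%:R * (p z * h1 z * h z y) + 2 * n%:R * (p z * kk z y) + 2 * n%:R * (n%:R - 1) * h1 y * (p z * h1 z))); last by move=> z _; ring.
rewrite !big_split /= -!big_distrr /= p_sum1 sum_kk Eh0.
rewrite -/(q y) -natr1; ring.
Qed.

Definition V1 := \sum_(x < M) p x * h1 x ^+ 2.
Definition V2 := \sum_(x < M) p x * kk x x.

Lemma E5 n : Ex (fun w : {ffun 'I_n -> 'I_M} => SS w ^+ 2) =
  4 * n%:R * (n%:R - 1) * (n%:R - 2) * V1 + 2 * n%:R * (n%:R - 1) * V2.
Proof.
elim: n => [|n IH].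
  rewrite (Ex_ext (G := fun _ => 0)); first by rewrite ExC; ring.
  by move=> w; rewrite /SS !big_ord0 subr0 expr2 mul0r.
rewrite Ex_split.
have key z : Ex (fun v : {ffun 'I_n -> 'I_M} => SS (consf z v) ^+ 2) =
   (4 * n%:R * (n%:R - 1) * (n%:R - 2) * V1 + 2 * n%:R * (n%:R - 1) * V2)
   + 4 * (2 * n%:R * (n%:R - 1) * q z)
   + 4 * (n%:R * kk z z + n%:R * (n%:R - 1) * h1 z * h1 z).
  rewrite (Ex_ext (G := fun v => SS v ^+ 2 + 4 * (SS v * L v z) + 4 * (L v z * L v z))).
    by rewrite !ExD !ExZ IH E4 E2.
  by move=> v; rewrite S_cons; ring.
under eq_bigr do rewrite key.
rewrite (eq_bigr (fun z => (4 * n%:R * (n%:R - 1) * (n%:R - 2) * V1 + 2 * n%:R * (n%:R - 1) * V2) * p z + 8 * n%:R * (n%:R - 1) * (p z * q z) + 4 * n%:R * (p z * kk z z) + 4 * n%:R * (n%:R - 1) * (p z * h1 z ^+ 2))); last by move=> z _; ring.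
rewrite !big_split /= -!big_distrr /= p_sum1 sum_q.
rewrite -/V1 -/V2 -natr1; ring.
Qed.

End Moments.
End Gen.

Lemma count_sum (R : realType) n M (w : {ffun 'I_n -> 'I_M}) (G : 'I_M -> R) :
  \sum_(i < n) G (w i) = \sum_(m < M) cell_count R w m * G m.
Proof.
rewrite (partition_big w predT) //=; apply: eq_bigr => m _.
rewrite (eq_bigr (fun _ => G m)); last by move=> i /eqP ->.
by rewrite sumr_const /cell_count mulr_natl cardsE.
Qed.

Lemma sum_delta2 (R : realType) M (f : 'I_M -> R) y :
  \sum_(m < M) f m * (y == m)%:R = f y.
Proof.
rewrite (bigD1 y) //= eqxx mulr1 big1 ?addr0 // => z; rewrite eq_sym => /negbTE ->.
by rewrite mulr0.
Qed.

Section Spec.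
Variables (R : realType) (M N : nat) (p alpha : 'I_M -> R).
Hypothesis p_pos : forall m, 0 < p m.
Hypothesis p_sum1 : \sum_(m < M) p m = 1.
Hypothesis N2 : (2 <= N)%N.

Definition K : R := N%:R * (N%:R - 1).
Definition a := \sum_(m < M) alpha m.
Definition c0 := a / K.
Definition beta x := alpha x / (K * p x ^+ 2).
Definition hh x y := (x == y)%:R * beta x - c0.

Lemma Npos : 0 < (N%:R : R).
Proof. by rewrite ltr0n; case: N N2. Qed.
Lemma N1pos : 0 < (N%:R : R) - 1.
Proof. rewrite subr_gt0 (_ : 1 = 1%:R) // ltr_nat. exact: N2. Qed.
Lemma Kpos : 0 < K.
Proof. by rewrite /K mulr_gt0 ?Npos ?N1pos. Qed.

Lemma hsym x y : hh x y = hh y x.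
Proof. rewrite /hh; case: (eqVneq x y) => [->|ne] //. by rewrite !mul0r. Qed.

Lemma sum_pdelta (f : 'I_M -> R) y : \sum_(z < M) p z * ((z == y)%:R * f z) = p y * f y.
Proof.
rewrite (bigD1 y) //= eqxx mul1r big1 ?addr0 // => z /negbTE ->.
by rewrite mul0r mulr0.
Qed.

Lemma pne0 x : p x != 0.
Proof. by rewrite gt_eqF ?p_pos. Qed.

Lemma h1E y : h1 p hh y = (alpha y / p y - a) / K.
Proof.
rewrite /h1 /hh.
rewrite (eq_bigr (fun z => p z * ((z == y)%:R * beta z) - c0 * p z)); last by move=> z _; ring.
rewrite sumrB sum_pdelta -big_distrr /= p_sum1 /beta /c0.
have := pne0 y; have := Kpos; rewrite lt0r => /andP[K0 _] py.
by field; rewrite K0 py.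
Qed.

Lemma Eh0 : \sum_(x < M) p x * h1 p hh x = 0.
Proof.
under eq_bigr do rewrite h1E.
rewrite (eq_bigr (fun x => (alpha x - a * p x) / K)); last first.
  move=> x _; have := pne0 x; have := Kpos; rewrite lt0r => /andP[K0 _] px.
  by field; rewrite K0 px.
rewrite -big_distrl /= sumrB -big_distrr /= p_sum1 /a; ring.
Qed.

Definition Asum := \sum_(m < M) (alpha m ^+ 2 / p m ^+ 2).
Definition Bsum := \sum_(m < M) p m * (alpha m / p m - \sum_(m' < M) alpha m') ^+ 2.

Lemma K0 : K != 0.
Proof. by have := Kpos; rewrite lt0r => /andP[]. Qed.

Lemma V1E : V1 p hh = Bsum / K ^+ 2.
Proof.
rewrite /V1 /Bsum -/a; under eq_bigr do rewrite h1E.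
rewrite big_distrl /=; apply: eq_bigr => x _.
have := pne0 x; have := K0 => k0 px; by field; rewrite k0.
Qed.

Lemma kkE x : kk p hh x x = p x * (beta x ^+ 2 - 2 * beta x * c0) + c0 ^+ 2.
Proof.
rewrite /kk.
rewrite (eq_bigr (fun z => p z * ((z == x)%:R * (beta z ^+ 2 - 2 * beta z * c0)) + c0 ^+ 2 * p z)); last first.
  by move=> z _; rewrite /hh; case: (z == x) => /=; ring.
by rewrite big_split /= sum_pdelta -big_distrr /= p_sum1 mulr1.
Qed.

Lemma V2E : V2 p hh = Asum / K ^+ 2 - c0 ^+ 2.
Proof.
rewrite /V2; under eq_bigr do rewrite kkE.
rewrite (eq_bigr (fun x => (alpha x ^+ 2 / p x ^+ 2) / K ^+ 2 - (2 * c0 / K) * alpha x + c0 ^+ 2 * p x)); last first.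
  move=> x _; have := pne0 x; have := K0 => k0 px; rewrite /beta; by field; rewrite k0 px.
rewrite big_split /= sumrB -big_distrl -!big_distrr /= p_sum1 -/Asum -/a /c0.
by field; rewrite K0.
Qed.

Lemma ES2 : Ex p (fun w : {ffun 'I_N -> 'I_M} => SS hh w ^+ 2) <= 2 * s2 N p alpha.
Proof.
rewrite (E5 p_sum1 hsym Eh0) V1E.
set u : R := N%:R.
have u2 : 2 <= u by rewrite /u -[2]/(2%:R : R) ler_nat.
have V2le : V2 p hh <= Asum / K ^+ 2 by rewrite V2E; have := sqr_ge0 c0; lra.
have A0 : 0 <= Asum by apply: sumr_ge0 => m _; rewrite divr_ge0 ?sqr_ge0.
have B0 : 0 <= Bsum by apply: sumr_ge0 => m _; rewrite mulr_ge0 ?sqr_ge0 ?ltW ?p_pos.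
have k0 := K0.
have Ku : K = u * (u - 1) by [].
have cpos : 0 <= 2 * u * (u - 1) by rewrite mulr_ge0 ?mulr_ge0; lra.
have step : 2 * u * (u - 1) * V2 p hh <= 2 * u * (u - 1) * (Asum / K ^+ 2) by rewrite ler_wpM2l.
have eq1 : 2 * s2 N p alpha - (4 * u * (u - 1) * (u - 2) * (Bsum / K ^+ 2) + 2 * u * (u - 1) * (Asum / K ^+ 2))
   = Bsum * (4 * u / K) + Asum * ((2 * u - 4) / (u * K)).
  rewrite /s2 -/Asum -/Bsum -/u Ku; field.
  by apply/andP; split; apply: lt0r_neq0; rewrite -/u; lra.
have Kp : 0 <= K by apply: ltW; exact: Kpos.
have c1 : 0 <= Bsum * (4 * u / K).
  by apply: mulr_ge0 => //; apply: divr_ge0 => //; lra.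
have c2 : 0 <= Asum * ((2 * u - 4) / (u * K)).
  by apply: mulr_ge0 => //; apply: divr_ge0; [lra| apply: mulr_ge0 => //; lra].
lra.
Qed.

Lemma stat_S (w : {ffun 'I_N -> 'I_M}) : stat_T p alpha w = SS hh w.
Proof.
have inner i : \sum_(j < N) hh (w i) (w j) = cell_count R w (w i) * beta (w i) - N%:R * c0.
  rewrite /hh sumrB sumr_const card_ord; congr (_ - _); last by rewrite mulr_natl.
  rewrite -big_distrl /=; congr (_ * _).
  by rewrite (count_sum w (fun m => (w i == m)%:R)) sum_delta2.
rewrite /SS; under eq_bigr do rewrite inner.
rewrite sumrB sumr_const card_ord -[_ *+ N]mulr_natl.
rewrite (count_sum w (fun m => cell_count R w m * beta m)).
rewrite /hh; under [X in _ = _ - X]eq_bigr do rewrite eqxx mul1r.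
rewrite sumrB sumr_const card_ord -[c0 *+ N]mulr_natl (count_sum w beta).
have ha : N%:R * (N%:R * c0) - (N%:R * c0) = a.
  rewrite /c0 /K; field; apply/andP; split; apply: lt0r_neq0; [exact: N1pos|exact: Npos].
suff -> : stat_T p alpha w = \sum_(m < M) cell_count R w m * (cell_count R w m * beta m)
   - \sum_(m < M) cell_count R w m * beta m - a by rewrite -ha; ring.
rewrite /stat_T /a -!sumrB; apply: eq_bigr => m _; rewrite /beta /K; ring.
Qed.

Lemma weight_ge0 (w : {ffun 'I_N -> 'I_M}) : 0 <= mult_weight p w.
Proof. by apply: prodr_ge0 => i _; apply: ltW. Qed.

Lemma ExT2 : Ex p (fun w : {ffun 'I_N -> 'I_M} => stat_T p alpha w ^+ 2) <= 2 * s2 N p alpha.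
Proof. by rewrite (Ex_ext p (G := fun w => SS hh w ^+ 2)) ?ES2 // => w; rewrite stat_S. Qed.

Lemma tail C : 0 < C ->
  mult_prob p (fun w : {ffun 'I_N -> 'I_M} => C * rate N p alpha < `|stat_T p alpha w|)
  <= 2 / C ^+ 2.
Proof.
move=> C0.
set r := rate N p alpha.
set E := (fun w : {ffun 'I_N -> 'I_M} => C * r < `|stat_T p alpha w|).
have Ex0 : 0 <= Ex p (fun w : {ffun 'I_N -> 'I_M} => stat_T p alpha w ^+ 2).
  by apply: sumr_ge0 => w _; rewrite mulr_ge0 ?weight_ge0 ?sqr_ge0.
have hE := ExT2.
have s20 : 0 <= s2 N p alpha by lra.
have r0 : Num.sqrt (s2 N p alpha) <= r.
  rewrite /r /rate lerDl divr_ge0 ?sqrtr_ge0 //.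
  by apply: sumr_ge0 => m _.
have sq0 := sqrtr_ge0 (s2 N p alpha).
have s2r : s2 N p alpha <= r ^+ 2.
  rewrite -(sqr_sqrtr s20).
  have : 0 <= (r - Num.sqrt (s2 N p alpha)) * (r + Num.sqrt (s2 N p alpha)).
    by apply: mulr_ge0; lra.
  rewrite !expr2; lra.
have sub : \sum_(w | E w) mult_weight p w * stat_T p alpha w ^+ 2
    <= Ex p (fun w : {ffun 'I_N -> 'I_M} => stat_T p alpha w ^+ 2).
  rewrite /Ex [X in _ <= X](bigID E) /= lerDl.
  by apply: sumr_ge0 => w _; rewrite mulr_ge0 ?weight_ge0 ?sqr_ge0.
have C2 : 0 < C ^+ 2 by rewrite exprn_gt0.
have [rz|rpos] := eqVneq r 0.
  have P0 : forall w, E w -> mult_weight p w * stat_T p alpha w ^+ 2 = 0.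
    apply: psumr_eq0P.
      by move=> w _; rewrite mulr_ge0 ?weight_ge0 ?sqr_ge0.
    apply/eqP; rewrite eq_le; apply/andP; split.
      by move: s2r; rewrite rz expr2 mul0r => ?; lra.
    by apply: sumr_ge0 => w _; rewrite mulr_ge0 ?weight_ge0 ?sqr_ge0.
  rewrite /mult_prob big1 ?divr_ge0 ?ltW // => w Ew.
  have := P0 w Ew; move/eqP; rewrite mulf_eq0 => /orP[/eqP //|].
  move: Ew; rewrite /E rz mulr0 => Tp.
  by rewrite expf_eq0 /= => /eqP T0; move: Tp; rewrite T0 normr0 ltxx.
have rp : 0 < r by rewrite lt_neqAle eq_sym rpos /=; have := sqrtr_ge0 (s2 N p alpha); lra.
have Cr : 0 < (C * r) ^+ 2 by rewrite exprn_gt0 // mulr_gt0.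
have key : mult_prob p E * (C * r) ^+ 2 <= 2 * r ^+ 2.
  rewrite /mult_prob big_distrl /=.
  apply: le_trans (_ : \sum_(w | E w) mult_weight p w * stat_T p alpha w ^+ 2 <= _); last by lra.
  apply: ler_sum => w Ew; apply: ler_wpM2l; first exact: weight_ge0.
  rewrite -(real_normK (num_real (stat_T p alpha w))).
  have : C * r < `|stat_T p alpha w| by [].
  have : 0 <= C * r by rewrite mulr_ge0 ?ltW.
  move=> h1 h2; rewrite !expr2; nra.
rewrite -(ler_pM2r Cr); apply: (le_trans key).
have -> : 2 / C ^+ 2 * (C * r) ^+ 2 = 2 * r ^+ 2 by field; rewrite gt_eqF.
by [].
Qed.

End Spec.

Theorem lemma8 (R : realType) (M : nat -> nat)
  (p alpha : forall n : nat, 'I_(M n) -> R)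
  (p_ge0 : forall (n : nat) (m : 'I_(M n)), 0 <= p n m)
  (p_sum1 : forall n : nat, \sum_(m < M n) p n m = 1)
  (* max_m p_{n,m} -> 0 *)
  (hmax : forall eps : R, 0 < eps ->
     exists n0 : nat, forall n : nat, (n0 <= n)%N -> forall m : 'I_(M n), p n m <= eps)
  (* liminf_n n * min_m p_{n,m} > 0 *)
  (hmin : exists c : R, 0 < c /\
     exists n0 : nat, forall n : nat, (n0 <= n)%N -> forall m : 'I_(M n), c <= n%:R * p n m) :
  (* T_n = O_P(s_n + sum_m |alpha_{n,m}| / sqrt n) *)
  forall eps : R, 0 < eps ->
    exists C : R, exists n0 : nat, forall n : nat, (n0 <= n)%N ->
      mult_prob (p n)
        (fun w : {ffun 'I_n -> 'I_(M n)} =>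
           C * rate n (p n) (alpha n) < `|stat_T (p n) (alpha n) w|) <= eps.
Proof.
move=> eps e0.
case: hmin => c [c0 [n0 hn0]].
have de : 0 < 2 / eps by rewrite divr_gt0.
have C0 : 0 < 1 + 2 / eps by lra.
exists (1 + 2 / eps), (maxn n0 2) => n; rewrite geq_max => /andP[hn n2].
have ppos : forall m, 0 < p n m.
  move=> m; have := hn0 n hn m; rewrite lt0r p_ge0 andbT.
  apply: contraTneq => ->; rewrite mulr0 -ltNge //.
apply: le_trans (tail (alpha n) ppos (p_sum1 n) n2 C0) _.
set C := 1 + 2 / eps.
have Ce : 2 <= eps * C by rewrite /C mulrDr mulr1 mulrCA divff ?gt_eqF // mulr1; lra.
have C1 : 1 <= C by rewrite /C lerDl divr_ge0 // ltW.
rewrite ler_pdivrMr ?exprn_gt0 //.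
have : eps * C <= eps * C ^+ 2.
  rewrite expr2; apply: ler_wpM2l; [lra | nra].
lra.
Qed.
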